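(* Let $(\mathcal{P},\cdot)$ be a finite-dimensional complex admissible Poisson algebra such that $\mathfrak{g}_{\mathcal{P}}$ is a simple complex Lie algebra. Then $U\bullet V=0$ for all $U,V\in\mathcal{P}$; equivalently $U\cdot V=\{U,V\}$ for all $U,V$, i.e. $\mathcal{A}_{\mathcal{P}}^2=\{0\}$.
   Context: Associator: $A(X,Y,Z)=(X\cdot Y)\cdot Z-X\cdot(Y\cdot Z)$. An admissible Poisson algebra is a vector space $\mathcal{P}$ with a bilinear product $\cdot$ satisfying $3A(X,Y,Z)=(X\cdot Z)\cdot Y+(Y\cdot Z)\cdot X-(Y\cdot X)\cdot Z-(Z\cdot X)\cdot Y$ for all $X,Y,Z$. $\{X,Y\}=\frac12(X\cdot Y-Y\cdot X)$, $X\bullet Y=\frac12(X\cdot Y+Y\cdot X)$; $\mathfrak{g}_{\mathcal{P}}=(\mathcal{P},\{\,,\,\})$, $\mathcal{A}_{\mathcal{P}}=(\mathcal{P},\bullet)$; these form a Poisson algebra (Lie bracket, commutative associative product, Leibniz rule $\{X\bullet Y,Z\}=X\bullet\{Y,Z\}+\{X,Z\}\bullet Y$). *)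

(* Defs.v *)
From HB Require Import structures.
From mathcomp Require Import all_boot all_order all_algebra.
From mathcomp Require Import complex.
From mathcomp Require Import reals.
Set Implicit Arguments. Unset Strict Implicit. Unset Printing Implicit Defensive.
Import Order.TTheory GRing.Theory Num.Theory.
Local Open Scope ring_scope.

Definition bilinear_prod (K : fieldType) (V : vectType K) (mul : V -> V -> V) :=
  (forall x, linear (mul x)) /\ (forall y, linear (fun x => mul x y)).

Definition assoc (K : fieldType) (V : vectType K) (mul : V -> V -> V) (x y z : V) :=
  mul (mul x y) z - mul x (mul y z).

Definition admissible_identity (K : fieldType) (V : vectType K) (mul : V -> V -> V) :=
  forall x y z : V,
    assoc mul x y z *+ 3 =
      mul (mul x z) y + mul (mul y z) x - mul (mul y x) z - mul (mul z x) y.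

Definition admissible_Poisson (K : fieldType) (V : vectType K) (mul : V -> V -> V) :=
  bilinear_prod mul /\ admissible_identity mul.

Definition pbracket (K : fieldType) (V : vectType K) (mul : V -> V -> V) (x y : V) : V :=
  2^-1 *: (mul x y - mul y x).
Definition pdot (K : fieldType) (V : vectType K) (mul : V -> V -> V) (x y : V) : V :=
  2^-1 *: (mul x y + mul y x).

Definition is_lie_algebra (K : fieldType) (V : vectType K) (br : V -> V -> V) :=
  [/\ forall x, linear (br x), forall y, linear (fun x => br x y),
      forall x, br x x = 0
    & forall x y z, br x (br y z) + br y (br z x) + br z (br x y) = 0].

Definition lie_ideal (K : fieldType) (V : vectType K) (br : V -> V -> V)
  (I : {vspace V}) := forall x y, y \in I -> br x y \in I.

Definition simple_lie_algebra (K : fieldType) (V : vectType K) (br : V -> V -> V) :=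
  [/\ is_lie_algebra br,
      exists x y, br x y != 0
    & forall I : {vspace V}, lie_ideal br I -> I = 0%VS \/ I = fullv].

(* Main.v *)
Require Import Defs.
From HB Require Import structures.
From mathcomp Require Import all_boot all_order all_algebra.
From mathcomp Require Import complex.
From mathcomp Require Import reals.
From mathcomp Require Import ring.
Set Implicit Arguments. Unset Strict Implicit. Unset Printing Implicit Defensive.
Import Order.TTheory GRing.Theory Num.Theory.
Local Open Scope ring_scope.
Section Basics.
Variables (K : numFieldType) (V : vectType K).

Lemma coordP (a b : V) :
  (forall i, coord (vbasis fullv) i a = coord (vbasis fullv) i b) -> a = b.
Proof.
move=> H; rewrite (coord_vbasis (memvf a)) (coord_vbasis (memvf b)).
by apply: eq_bigr => i _; rewrite H.
Qed.

Variable mul : V -> V -> V.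
Hypothesis bil : bilinear_prod mul.

Lemma bm_0r x : mul 0 x = 0.
Proof.
have := bil.2 x 1 0 0; rewrite !scale1r addr0 => H.
by apply: (@addrI _ (mul 0 x)); rewrite addr0 -H.
Qed.
Lemma bm_r0 x : mul x 0 = 0.
Proof.
have := bil.1 x 1 0 0; rewrite !scale1r addr0 => H.
by apply: (@addrI _ (mul x 0)); rewrite addr0 -H.
Qed.
Lemma bm_Dl x u v : mul (u + v) x = mul u x + mul v x.
Proof. by have := bil.2 x 1 u v; rewrite !scale1r. Qed.
Lemma bm_Dr x u v : mul x (u + v) = mul x u + mul x v.
Proof. by have := bil.1 x 1 u v; rewrite !scale1r. Qed.
Lemma bm_Zl x a u : mul (a *: u) x = a *: mul u x.
Proof. by have := bil.2 x a u 0; rewrite !addr0 bm_0r addr0. Qed.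
Lemma bm_Zr x a u : mul x (a *: u) = a *: mul x u.
Proof. by have := bil.1 x a u 0; rewrite !addr0 bm_r0 addr0. Qed.
Lemma bm_Nl x u : mul (- u) x = - mul u x.
Proof. by rewrite -scaleN1r bm_Zl scaleN1r. Qed.
Lemma bm_Nr x u : mul x (- u) = - mul x u.
Proof. by rewrite -scaleN1r bm_Zr scaleN1r. Qed.
Lemma bm_Bl x u v : mul (u - v) x = mul u x - mul v x.
Proof. by rewrite bm_Dl bm_Nl. Qed.
Lemma bm_Br x u v : mul x (u - v) = mul x u - mul x v.
Proof. by rewrite bm_Dr bm_Nr. Qed.

Hypothesis adm : admissible_identity mul.

Lemma right_elim x y z : mul x (mul y z) = mul (mul x y) z - 3^-1 *:
  (mul (mul x z) y + mul (mul y z) x - mul (mul y x) z - mul (mul z x) y).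
Proof.
rewrite -adm /assoc -scaler_nat scalerA mulVf ?scale1r ?pnatr_eq0 //.
by rewrite opprB addrC subrK.
Qed.

Ltac vexp := rewrite /pdot /pbracket ?(bm_Dl, bm_Dr, bm_Zl, bm_Zr, bm_Nl, bm_Nr, bm_Bl, bm_Br);
  rewrite ?right_elim.
Ltac vnorm := apply: coordP => i;
  rewrite ?(linearD, linearB, linearN, linearZ, linear0) /=.

Lemma pdotA x y z : pdot mul (pdot mul x y) z = pdot mul x (pdot mul y z).
Proof.
by vexp; vnorm; field.
Qed.
Lemma leibniz x y z : pbracket mul (pdot mul x y) z =
  pdot mul x (pbracket mul y z) + pdot mul (pbracket mul x z) y.
Proof. by vexp; vnorm; field. Qed.
End Basics.

Record calg (K : numFieldType) (V : vectType K) := CAlg {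
  cd : V -> V -> V;
  cd_bil : bilinear_prod cd;
  cdC : commutative cd;
  cdA : associative cd }.

Definition unitz (K : numFieldType) (V : vectType K) (c : calg V) : Type :=
  (K * V)%type.

Section Unitz.
Variables (K : numFieldType) (V : vectType K) (c : calg V).
Local Notation U := (@unitz K V c).

HB.instance Definition _ := GRing.Zmodule.copy U (K * V)%type.

Definition umul (x y : U) : U :=
  (x.1 * y.1, x.1 *: y.2 + y.1 *: x.2 + cd c x.2 y.2).
Definition uone : U := (1, 0).

Ltac cexp := rewrite /umul /uone /=; repeat first [rewrite (bm_Dl (cd_bil c)) |
  rewrite (bm_Dr (cd_bil c)) | rewrite (bm_Zl (cd_bil c)) | rewrite (bm_Zr (cd_bil c)) |
  rewrite (bm_Nl (cd_bil c)) | rewrite (bm_Nr (cd_bil c)) | rewrite (bm_0r (cd_bil c)) |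
  rewrite (bm_r0 (cd_bil c))].
Ltac vnorm := apply: coordP => i;
  rewrite ?(linearD, linearB, linearN, linearZ, linear0) /=.

Lemma umulA : associative umul.
Proof.
case=> a u [b v] [e w]; cexp; rewrite ?cdA; congr pair; first by ring.
by vnorm; ring.
Qed.
Lemma umulC : commutative umul.
Proof.
case=> a u [b v]; cexp; rewrite (cdC c u v); congr pair; first by ring.
by vnorm; ring.
Qed.
Lemma umul1 : left_id uone umul.
Proof.
case=> a u; cexp; congr pair; first by ring.
by vnorm; ring.
Qed.
Lemma umulDl : left_distributive umul +%R.
Proof.
case=> a u [b v] [e w]; cexp; congr pair => /=; first by ring.
by vnorm; ring.
Qed.
Lemma uone_neq0 : uone != 0.
Proof. by apply/eqP => -[] /eqP; rewrite oner_eq0. Qed.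

HB.instance Definition _ := GRing.Zmodule_isComNzRing.Build U
  umulA umulC umul1 umulDl uone_neq0.

Definition ufst (x : U) : K := x.1.
Fact ufst_zmod : zmod_morphism ufst. Proof. by case=> a u [b v]. Qed.
HB.instance Definition _ := GRing.isZmodMorphism.Build U K ufst ufst_zmod.
Fact ufst_monoid : monoid_morphism ufst. Proof. by split => // -[a u] [b v]. Qed.
HB.instance Definition _ := GRing.isMonoidMorphism.Build U K ufst ufst_monoid.

End Unitz.

Section Main.
Variables (K : numFieldType) (V : vectType K) (mul : V -> V -> V).
Hypothesis HP : admissible_Poisson mul.
Hypothesis HS : simple_lie_algebra (pbracket mul).

Local Notation dot := (pdot mul).
Local Notation br := (pbracket mul).
Let mbil := HP.1.

Ltac vexp := rewrite /pdot /pbracket; repeat first [rewrite (bm_Dl mbil) |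
  rewrite (bm_Dr mbil) | rewrite (bm_Zl mbil) | rewrite (bm_Zr mbil) |
  rewrite (bm_Nl mbil) | rewrite (bm_Nr mbil) | rewrite (bm_0r mbil) |
  rewrite (bm_r0 mbil)].
Ltac vnorm := apply: coordP => i;
  rewrite ?(linearD, linearB, linearN, linearZ, linear0) /=.

Lemma dot_bil : bilinear_prod dot.
Proof. split=> x a u v.
all: vexp.
all: vnorm.
all: ring.
Qed.
Lemma dotC : commutative dot.
Proof. by move=> x y; rewrite /pdot [mul x y + _]addrC. Qed.
Lemma dotA : associative dot.
Proof. by move=> x y z; rewrite (pdotA HP.1 HP.2). Qed.
Lemma br_bil : bilinear_prod br.
Proof. by case: HS => -[? ? _ _] _ _; split. Qed.
Lemma brN x y : br x y = - br y x.
Proof. by rewrite /br /pbracket -scalerN opprB. Qed.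
Lemma leib x y z : br (dot x y) z = dot x (br y z) + dot (br x z) y.
Proof. exact: (leibniz HP.1 HP.2). Qed.

Let dbil := dot_bil.
Local Notation n := (\dim (@fullv _ V)).
Local Notation b := (vbasis (@fullv _ V)).
Local Notation X := [seq dot x y | x <- (b : seq V), y <- (b : seq V)].
Local Notation W := <<X>>%VS.

Lemma sumL (f : 'I_n -> V) v : dot (\sum_i f i) v = \sum_i dot (f i) v.
Proof. exact: (big_morph (dot^~ v) (bm_Dl dbil v) (bm_0r dbil v)). Qed.
Lemma sumR (f : 'I_n -> V) v : dot v (\sum_i f i) = \sum_i dot v (f i).
Proof. exact: (big_morph (dot v) (bm_Dr dbil v) (bm_r0 dbil v)). Qed.

Lemma bX (i : 'I_n) : b`_i \in (b : seq V).
Proof. by apply: mem_nth; rewrite size_tuple. Qed.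

Lemma dot_in_W u v : dot u v \in W.
Proof.
rewrite (coord_vbasis (memvf u)) (coord_vbasis (memvf v)) sumL.
apply: memv_suml => i _; rewrite sumR; apply: memv_suml => j _.
rewrite (bm_Zl dbil) (bm_Zr dbil); apply: memvZ; apply: memvZ.
by apply: memv_span; apply: allpairs_f; apply: bX.
Qed.

Lemma W_ideal : lie_ideal br W.
Proof.
move=> x y Hy; rewrite [y](@coord_span _ _ _ (in_tuple X)) //.
rewrite (big_morph (br x) (bm_Dr br_bil x) (bm_r0 br_bil x)).
apply: memv_suml => k _; rewrite (bm_Zr br_bil); apply: memvZ.
have /allpairsP [[p q] [_ _ ->]] : X`_k \in X by apply: mem_nth.
by rewrite brN leib /= memvN; apply: memvD; apply: dot_in_W.
Qed.


Lemma W_form w : w \in W -> exists f : {ffun 'I_n -> V}, w = \sum_j dot (f j) b`_j.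
Proof.
move=> Hw; rewrite [w](@coord_span _ _ _ (in_tuple X)) //.
apply: (big_ind (fun w => exists f : {ffun 'I_n -> V}, w = \sum_j dot (f j) b`_j)).
- exists [ffun _ => 0]; symmetry; apply: big1 => j _; by rewrite ffunE (bm_0r dbil).
- move=> _ _ [f ->] [g ->]; exists [ffun j => f j + g j]; rewrite -big_split.
  by apply: eq_bigr => j _; rewrite ffunE (bm_Dl dbil).
- move=> k _; have /allpairsP [[p q] [_ _ E]] : X`_k \in X by apply: mem_nth.
  exists [ffun j => coord (in_tuple X) k w *: (coord b j q *: p)].
  rewrite E /= {1}(coord_vbasis (memvf q)) sumR scaler_sumr; apply: eq_bigr => j _.
  by rewrite ffunE !(bm_Zl dbil) (bm_Zr dbil).
Qed.

Lemma unit_exists : W = fullv -> exists e, forall x, dot e x = x.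
Proof.
move=> HW.
have : forall i : 'I_n, exists f : {ffun 'I_n -> V}, b`_i = \sum_j dot (f j) b`_j.
  by move=> i; apply: W_form; rewrite HW memvf.
case/fin_all_exists => F HF.
pose c := CAlg dot_bil dotC dotA.
pose C : 'M[@unitz K V c]_n := \matrix_(i, j) ((0 : K), F i j).
pose w : 'cV[@unitz K V c]_n := \matrix_(i, j) ((0 : K), b`_i).
have fst_sum (G : 'I_n -> @unitz K V c) : (\sum_j G j).1 = \sum_j (G j).1.
  exact: (big_morph (fun x : @unitz K V c => x.1) (fun x y => erefl) erefl).
have snd_sum (G : 'I_n -> @unitz K V c) : (\sum_j G j).2 = \sum_j (G j).2.
  exact: (big_morph (fun x : @unitz K V c => x.2) (fun x y => erefl) erefl).
have Cw : C *m w = w.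
  apply/matrixP => i k; rewrite !mxE [in RHS]HF [LHS]surjective_pairing.
  congr pair; first by rewrite fst_sum big1 // => j _; rewrite !mxE /= mulr0.
  rewrite snd_sum; apply: eq_bigr => j _; rewrite !mxE /=.
  by rewrite !scale0r !add0r.
pose M := 1%:M - C.
have Mw : M *m w = 0 by rewrite mulmxBl mul1mx Cw subrr.
have D : (\det M) *: w = 0.
  by rewrite -mul_scalar_mx -mul_adj_mx -mulmxA Mw mulmx0.
have D1 : ufst (\det M) = 1.
  rewrite -det_map_mx; have -> : map_mx (@ufst K V c) M = 1%:M.
    apply/matrixP => i j; rewrite !mxE rmorphB /= rmorph_nat.
    by rewrite /ufst /= subr0.
  exact: det1.
exists (- (\det M).2) => x.
have Hb (j : 'I_n) : dot (- (\det M).2) b`_j = b`_j.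
  have := congr1 (fun N : 'cV[@unitz K V c]_n => N j ord0) D; rewrite !mxE => /(congr1 snd) /=.
  rewrite -[(\det M).1]/(ufst (\det M)) D1 scale1r scale0r addr0.
  by move=> E; rewrite (bm_Nl dbil); apply/esym/eqP; rewrite -addr_eq0 E.
rewrite (coord_vbasis (memvf x)) sumR; apply: eq_bigr => j _.
by rewrite (bm_Zr dbil) Hb.
Qed.

Theorem gen_main u v : dot u v = 0.
Proof.
case: HS => HL [x0 [y0 Hxy]] Hid.
have [W0|Wfull] := Hid _ W_ideal.
  by apply/eqP; rewrite -memv0 -W0 dot_in_W.
have [e He] := unit_exists Wfull.
have brE x : br e x = 0.
  have := leib e e x; rewrite (dotC (br e x) e) !He => H.
  by apply: (@addrI _ (br e x)); rewrite addr0 -H.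
have Iid : lie_ideal br <[e]>%VS.
  by move=> x y /vlineP [k ->]; rewrite (bm_Zr br_bil) brN brE oppr0 scaler0 mem0v.
have [I0|Ifull] := Hid _ Iid.
  have e0 : e = 0 by apply/eqP; rewrite -memv0 -I0 memv_line.
  by rewrite -(He (dot u v)) e0 (bm_0r dbil).
exfalso; move: Hxy; have := memvf x0; have := memvf y0.
rewrite -Ifull => /vlineP [k ->] /vlineP [l ->].
by rewrite (bm_Zl br_bil) (bm_Zr br_bil) brE !scaler0 eqxx.
Qed.

End Main.

(* (R : realType) so that R[i] is the field of complex numbers;
   V : vectType R[i] is a finite-dimensional complex vector space. *)
Theorem mainTheorem13 (R : realType) (V : vectType R[i]) (mul : V -> V -> V) :
  admissible_Poisson mul ->
  simple_lie_algebra (pbracket mul) ->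
  forall u v : V, pdot mul u v = 0.
Proof. by move=> HP HS u v; apply: (gen_main HP HS). Qed.
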